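(* Let $k$ be a positive integer and let $m>k$ be an integer. If $v$ and $w$ are vertices lying in distinct connected components of $\mathcal F_k^{(m)}$, then they lie in distinct connected components of $\mathcal F_k^{(m+1)}$.
   Context: The vertex set $V$ consists of all reduced fractions $p/q$ with $p,q\in\mathbb Z$, $\gcd(p,q)=1$, together with $1/0$; here $p/q$ and $(-p)/(-q)$ denote the same vertex. For vertices define $d(p/q,a/b)=|pb-qa|$. The graph $\mathcal F_k$ has vertex set $V$, with an edge between $p/q$ and $a/b$ exactly when $d(p/q,a/b)=k$. The level of a vertex $p/q$ is $\max\{|p|,|q|\}$. For $m\in\mathbb N$, $\mathcal F_k^{(m)}$ is the subgraph of $\mathcal F_k$ induced on the vertices of level at most $m$. *)

(* Defs.v *)
From Stdlib Require Import ZArith Relations.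
Open Scope Z_scope.

(* A vertex p/q is represented by a pair (p,q) of integers with gcd(p,q)=1
   (this includes 1/0 = (1,0) and excludes (0,0)). The pairs (p,q) and
   (-p,-q) denote the same vertex. *)
Definition is_vertex (v : Z * Z) : Prop := Z.gcd (fst v) (snd v) = 1.

Definition vneg (v : Z * Z) : Z * Z := (- fst v, - snd v).

Definition dist (v w : Z * Z) : Z :=
  Z.abs (fst v * snd w - snd v * fst w).

Definition level (v : Z * Z) : Z := Z.max (Z.abs (fst v)) (Z.abs (snd v)).

(* One step in F_k^(m), working with representatives: either an edge
   (d = k) or passing between two representatives of the same vertex. *)
Definition step (k m : Z) (v w : Z * Z) : Prop :=
  is_vertex v /\ is_vertex w /\ level v <= m /\ level w <= m /\
  (dist v w = k \/ w = vneg v).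

Definition connected (k m : Z) (v w : Z * Z) : Prop :=
  clos_refl_trans (Z * Z) (step k m) v w.

(* Main.v *)
Require Import Defs.
From Stdlib Require Import ZArith Relations Lia.
Open Scope Z_scope.

Lemma high_shape (m : Z) (u : Z * Z) :
  1 <= m -> is_vertex u -> level u = m + 1 ->
  (Z.abs (fst u) = m + 1 /\ Z.abs (snd u) <= m) \/
  (Z.abs (snd u) = m + 1 /\ Z.abs (fst u) <= m).
Proof.
  destruct u as [a b]; unfold is_vertex, level; simpl; intros Hm Hg Hl.
  assert (~ (Z.abs a = m + 1 /\ Z.abs b = m + 1)).
  { intros [Ha Hb]. rewrite <- Z.gcd_abs_l, <- Z.gcd_abs_r, Ha, Hb, Z.gcd_diag in Hg. lia. }
  lia.
Qed.

Lemma no_high_edge (k m : Z) (u u' : Z * Z) :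
  0 < k -> k < m -> is_vertex u -> is_vertex u' ->
  level u = m + 1 -> level u' = m + 1 -> dist u u' = k -> False.
Proof.
  intros Hk Hkm Hu Hu' Hl Hl' Hd.
  destruct (high_shape m u ltac:(lia) Hu Hl) as [[H1 H2]|[H1 H2]];
  destruct (high_shape m u' ltac:(lia) Hu' Hl') as [[H3 H4]|[H3 H4]];
  destruct u as [a b]; destruct u' as [c d]; unfold dist in Hd; simpl in *.
  - assert (exists s, (s = 1 \/ s = -1) /\ a = s * (m+1)) as [s [Hs ->]] by
      (destruct (Z.abs_spec a); [exists 1|exists (-1)]; lia).
    assert (exists t, (t = 1 \/ t = -1) /\ c = t * (m+1)) as [t [Ht ->]] by
      (destruct (Z.abs_spec c); [exists 1|exists (-1)]; lia).
    replace (s * (m + 1) * d - b * (t * (m + 1))) with ((m+1) * (s*d - t*b)) in Hd by ring.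
    rewrite Z.abs_mul in Hd.
    assert (s*d - t*b = 0 \/ 1 <= Z.abs (s*d - t*b)) as [H0|H0] by lia; [rewrite H0 in Hd|]; nia.
  - assert (a = m+1 \/ a = -(m+1)) as [->| ->] by lia;
    (assert (d = m+1 \/ d = -(m+1)) as [->| ->] by lia);
    (assert (Z.abs (b * c) <= m * m) by (rewrite Z.abs_mul; nia)); lia.
  - assert (b = m+1 \/ b = -(m+1)) as [->| ->] by lia;
    (assert (c = m+1 \/ c = -(m+1)) as [->| ->] by lia);
    (assert (Z.abs (a * d) <= m * m) by (rewrite Z.abs_mul; nia)); lia.
  - assert (exists s, (s = 1 \/ s = -1) /\ b = s * (m+1)) as [s [Hs ->]] by
      (destruct (Z.abs_spec b); [exists 1|exists (-1)]; lia).
    assert (exists t, (t = 1 \/ t = -1) /\ d = t * (m+1)) as [t [Ht ->]] by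
      (destruct (Z.abs_spec d); [exists 1|exists (-1)]; lia).
    replace (a * (t * (m + 1)) - s * (m + 1) * c) with ((m+1) * (t*a - s*c)) in Hd by ring.
    rewrite Z.abs_mul in Hd.
    assert (t*a - s*c = 0 \/ 1 <= Z.abs (t*a - s*c)) as [H0|H0] by lia; [rewrite H0 in Hd|]; nia.
Qed.

Definition det (v w : Z * Z) : Z := fst v * snd w - snd v * fst w.

Lemma vneg_vertex v : is_vertex v -> is_vertex (vneg v).
Proof. destruct v; unfold is_vertex, vneg; simpl. rewrite Z.gcd_opp_l, Z.gcd_opp_r. auto. Qed.

Lemma level_vneg v : level (vneg v) = level v.
Proof. destruct v; unfold level, vneg; simpl. rewrite !Z.abs_opp. auto. Qed.

Lemma conn_neg k m y : is_vertex y -> level y <= m -> connected k m y (vneg y).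
Proof.
  intros. apply rt_step. repeat split; auto using vneg_vertex; rewrite ?level_vneg; auto.
Qed.

Lemma core (k m : Z) (u z z' : Z * Z) :
  0 < k -> k < m -> is_vertex u -> level u = m + 1 ->
  is_vertex z -> is_vertex z' -> level z <= m -> level z' <= m ->
  det u z = k -> det u z' = k -> connected k m z z'.
Proof.
  intros Hk Hkm Hu Hl Hz Hz' Hlz Hlz' Hd Hd'.
  assert (Ht : exists t, (t = -1 \/ t = 0 \/ t = 1) /\
     fst z - fst z' = t * fst u /\ snd z - snd z' = t * snd u).
  { destruct (high_shape m u ltac:(lia) Hu Hl) as [[H1 H2]|[H1 H2]];
    destruct u as [a b]; destruct z as [x y]; destruct z' as [x' y'];
    unfold det, level, is_vertex in *; simpl in *.
    - assert (Hdiv : (a | b * (x - x'))) by (exists (y - y'); lia).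
      apply Z.gauss in Hdiv; [|auto].
      destruct Hdiv as [t Ht]. exists t.
      assert (t = -1 \/ t = 0 \/ t = 1).
      { assert (Z.abs (x - x') = Z.abs t * (m+1)) by (rewrite Ht, Z.abs_mul; lia).
        assert (Z.abs t <= 1) by (clear -H H2 H1 Hlz Hlz' Hkm Hk; nia). lia. }
      split; [auto|split; [lia|]].
      assert (a * (y - y' - t * b) = 0).
      { assert (a * (y - y') = b * (x - x')) by lia. rewrite Ht in H0. 
        replace (a * (y - y' - t * b)) with (a * (y - y') - b * (t * a)) by ring. lia. }
      apply Z.mul_eq_0 in H0. lia.
    - assert (Hdiv : (b | a * (y - y'))) by (exists (x - x'); lia).
      apply Z.gauss in Hdiv; [|rewrite Z.gcd_comm; auto].
      destruct Hdiv as [t Ht]. exists t.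
      assert (t = -1 \/ t = 0 \/ t = 1).
      { assert (Z.abs (y - y') = Z.abs t * (m+1)) by (rewrite Ht, Z.abs_mul; lia).
        assert (Z.abs t <= 1) by (clear -H H2 H1 Hlz Hlz' Hkm Hk; nia). lia. }
      split; [auto|split; [|lia]].
      assert (b * (x - x' - t * a) = 0).
      { assert (b * (x - x') = a * (y - y')) by lia. rewrite Ht in H0.
        replace (b * (x - x' - t * a)) with (b * (x - x') - a * (t * b)) by ring. lia. }
      apply Z.mul_eq_0 in H0. lia. }
  destruct Ht as [t [Ht [E1 E2]]].
  destruct u as [a b]; destruct z as [x y]; destruct z' as [x' y'];
  unfold det in *; simpl in *.
  destruct Ht as [->|[->| ->]].
  - apply rt_step. repeat split; auto. left. unfold dist; simpl.
    replace x with (x' - a) by lia. replace y with (y' - b) by lia.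
    replace ((x' - a) * y' - (y' - b) * x') with (- (a * y' - b * x')) by ring. lia.
  - replace x with x' by lia. replace y with y' by lia. apply rt_refl.
  - apply rt_step. repeat split; auto. left. unfold dist; simpl.
    replace x with (x' + a) by lia. replace y with (y' + b) by lia.
    replace ((x' + a) * y' - (y' + b) * x') with (a * y' - b * x') by ring. lia.
Qed.

Lemma det_vneg u y : det u (vneg y) = - det u y.
Proof. destruct u, y; unfold det, vneg; simpl; ring. Qed.

Lemma lemA (k m : Z) (u y y' : Z * Z) :
  0 < k -> k < m -> is_vertex u -> level u = m + 1 ->
  is_vertex y -> is_vertex y' -> level y <= m -> level y' <= m ->
  dist u y = k -> dist u y' = k -> connected k m y y'.
Proof.
  intros Hk Hkm Hu Hl Hy Hy' Hly Hly' Hd Hd'.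
  assert (Hd1 : dist u y = Z.abs (det u y)) by reflexivity.
  assert (Hd2 : dist u y' = Z.abs (det u y')) by reflexivity.
  assert (E : exists z, connected k m y z /\ is_vertex z /\ level z <= m /\ det u z = k).
  { destruct (Z.abs_spec (det u y)) as [[_ H]|[_ H]].
    - exists y. repeat split; try apply rt_refl; auto; lia.
    - exists (vneg y). repeat split; auto using conn_neg, vneg_vertex.
      rewrite level_vneg; auto. rewrite det_vneg. lia. }
  assert (E' : exists z, connected k m z y' /\ is_vertex z /\ level z <= m /\ det u z = k).
  { destruct (Z.abs_spec (det u y')) as [[_ H]|[_ H]].
    - exists y'. repeat split; try apply rt_refl; auto; lia.
    - exists (vneg y'). repeat split; auto using vneg_vertex.
      + apply rt_step. repeat split; auto using vneg_vertex. rewrite level_vneg; auto.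
        right. destruct y'; unfold vneg; simpl. f_equal; lia.
      + rewrite level_vneg; auto.
      + rewrite det_vneg. lia. }
  destruct E as [z [C1 [Hz [Hlz Hdz]]]].
  destruct E' as [z' [C2 [Hz' [Hlz' Hdz']]]].
  eapply rt_trans; [exact C1|]. eapply rt_trans; [|exact C2].
  apply (core k m u z z'); auto.
Qed.

Lemma dist_sym v w : dist v w = dist w v.
Proof. destruct v, w; unfold dist; simpl. rewrite <- Z.abs_opp. f_equal; ring. Qed.

Theorem proposition4p8 (k m : Z) (v w : Z * Z) :
  0 < k -> k < m ->
  is_vertex v -> is_vertex w -> level v <= m -> level w <= m ->
  ~ connected k m v w -> ~ connected k (m + 1) v w.
Proof.
  intros Hk Hkm Hv Hw Hlv Hlw Hn Hc. apply Hn.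
  apply clos_rt_rtn1 in Hc.
  assert (P : forall x, clos_refl_trans_n1 _ (step k (m+1)) v x ->
     (level x <= m /\ connected k m v x) \/
     (level x = m + 1 /\ is_vertex x /\ exists y, is_vertex y /\ level y <= m /\ dist x y = k /\ connected k m v y)).
  { intros x Hx. induction Hx as [|x1 x2 Hs Hx IH].
    - left. split; auto. apply rt_refl.
    - destruct Hs as [V1 [V2 [L1 [L2 HS]]]].
      destruct IH as [[Hl1 C1]|[Hl1 [_ [y [Vy [Ly [Dy Cy]]]]]]].
      + destruct (Z_le_gt_dec (level x2) m) as [Hl2|Hl2].
        * left. split; auto. eapply rt_trans; [exact C1|]. apply rt_step.
          repeat split; auto.
        * right. split; [lia|split; auto]. exists x1. repeat split; auto.
          -- rewrite dist_sym. destruct HS as [HS| ->]; auto.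
             rewrite level_vneg in Hl2. lia.
      + destruct (Z_le_gt_dec (level x2) m) as [Hl2|Hl2].
        * left. split; auto. destruct HS as [HS| ->].
          -- eapply rt_trans; [exact Cy|]. eapply lemA with (u := x1); eauto.
          -- rewrite level_vneg in Hl2. lia.
        * right. split; [lia|split; auto]. destruct HS as [HS| ->].
          -- exfalso. eapply (no_high_edge k m x1 x2); eauto. lia.
          -- exists y. repeat split; auto.
             unfold dist, vneg in *; destruct x1, y; simpl in *.
             rewrite <- Dy, <- Z.abs_opp. f_equal; ring. }
  destruct (P w Hc) as [[_ C]|[H _]]; auto. lia.
Qed.
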